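(* Let $G$ be a finite graph with $n$ vertices such that $\mathrm{Aut}(G)$ is isomorphic to the dihedral group $D_t$ of order $2t$; write its elements as $\pi_{\rho^i}$ and $\pi_{\tau\rho^i}$, $i=0,\dots,t-1$, where $\pi_\rho$ has order $t$, $\pi_\tau^2=\pi_{\rho^0}$ is the identity, $\pi_{\tau}\pi_{\rho^i}=\pi_{\rho^{-i}}\pi_\tau$, and $\pi_{\tau\rho^i}=\pi_\tau\pi_{\rho^i}$. Let $t=\prod_{i=1}^s p_i^{r_i}$ be the prime factorization of $t$ and $P^*=\{\pi_{\rho^{t/p_1}},\dots,\pi_{\rho^{t/p_s}}\}$. Then for every positive integer $k$ and every $i\in\{0,\dots,t-1\}$, $$N_=(\{\pi_{\rho^0},\pi_{\tau\rho^i}\})=\sum_{\{\pi_{\tau\rho^i}\}\subseteq P\subseteq\{\pi_{\tau\rho^i}\}\cup P^*}(-1)^{|P|-1}N_{\ge}(P),$$ and $$L(G,k)=\sum_{P\subseteq P^*}(-1)^{|P|}N_{\ge}(P)-\sum_{i=0}^{t-1}N_=(\{\pi_{\rho^0},\pi_{\tau\rho^i}\}).$$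
   Context: A $k$-labeling of $G$ is a map $\phi:V(G)\to\{1,\dots,k\}$; an automorphism $\pi$ preserves $\phi$ if $\phi(\pi(v))=\phi(v)$ for all $v$; $\phi$ is distinguishing if only the identity preserves it; $L(G,k)$ is the number of distinguishing $k$-labelings. For $P\subseteq\mathrm{Aut}(G)$, $N_{\ge}(P)$ is the number of $k$-labelings preserved by every automorphism in $P$ (so $N_{\ge}(\emptyset)=k^n$), and $N_=(P)$ is the number of $k$-labelings whose set of preserving automorphisms is exactly $P$. *)

(* Defs.v *)
From mathcomp Require Import all_boot all_order all_algebra all_fingroup.
Set Implicit Arguments. Unset Strict Implicit. Unset Printing Implicit Defensive.

(* A finite simple graph: vertex type V : finType, adjacency e : rel V
   (symmetric, irreflexive, assumed in the theorem). *)

Definition AutG (V : finType) (e : rel V) : {set {perm V}} :=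
  [set s : {perm V} | [forall x, forall y, e (s x) (s y) == e x y]].

Definition labeling (V : finType) (k : nat) := {ffun V -> 'I_k}.

Definition preserves (V : finType) (k : nat) (s : {perm V}) (phi : labeling V k) : bool :=
  [forall v, phi (s v) == phi v].

Definition stab (V : finType) (e : rel V) (k : nat) (phi : labeling V k) : {set {perm V}} :=
  [set s in AutG e | preserves s phi].

Definition Nge (V : finType) (k : nat) (P : {set {perm V}}) : nat :=
  #|[set phi : labeling V k | [forall s in P, preserves s phi]]|.

Definition Neq (V : finType) (e : rel V) (k : nat) (P : {set {perm V}}) : nat :=
  #|[set phi : labeling V k | stab e phi == P]|.

Definition distinguishing (V : finType) (e : rel V) (k : nat) (phi : labeling V k) : bool :=
  stab e phi == [set 1%g].

Definition L (V : finType) (e : rel V) (k : nat) : nat :=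
  #|[set phi : labeling V k | distinguishing e phi]|.

(* Main.v *)
Require Import Defs.
From mathcomp Require Import all_boot all_order all_algebra all_fingroup cyclic zify.
Import GRing.Theory Num.Theory.
Local Open Scope ring_scope.

Lemma alt_sum (T : finType) (S : {set T}) :
  \sum_(P in powerset S) (-1) ^+ #|P| = ((S == set0)%:R : int).
Proof.
have [->|/set0Pn [x xS]] := eqVneq S set0.
  by rewrite powerset0 big_set1 cards0 expr0.
pose f (P : {set T}) := if x \in P then P :\ x else x |: P.
have fK : involutive f.
  move=> P; rewrite /f; case: (boolP (x \in P)) => xP.
    by rewrite setD11 setD1K.
  by rewrite setU11 setU1K.
have fS P : (f P \in powerset S) = (P \in powerset S).
  rewrite /f !powersetE; case: ifP => xP.
    apply/idP/idP => H; last by apply: subset_trans H; apply: subD1set.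
    by rewrite -(setD1K xP) subUset sub1set xS.
  by rewrite subUset sub1set xS.
have fC P : (-1) ^+ #|f P| = - (-1) ^+ #|P| :> int.
  rewrite /f; case: ifP => xP.
    by rewrite [in RHS](cardsD1 x P) xP add1n exprS mulN1r opprK.
  by rewrite cardsU1 xP add1n exprS mulN1r.
set s := \sum_(P in _) _.
have : s = - s.
  rewrite {1}/s (reindex_inj (inv_inj fK)) /=.
  rewrite -sumrN; apply: eq_big => P; first by rewrite fS.
  by move=> _; rewrite fC.
move/eqP; rewrite -addr_eq0 -mulr2n mulrn_eq0 /= => /eqP ->.
by [].
Qed.

Lemma card_sum (X : finType) (C : pred X) :
  (#|[set x | C x]| : int) = \sum_x (C x)%:R.
Proof.
rewrite -natz -sumr_const big_mkcond /=; apply: eq_bigr => x _.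
by rewrite inE; case: (C x).
Qed.

Lemma IE (X A : finType) (B : pred X) (Q : {set A}) (R : X -> A -> bool) :
  \sum_(P in powerset Q) (-1) ^+ #|P| * (#|[set x | B x && [forall a in P, R x a]]| : int)
  = #|[set x | B x && [forall a in Q, ~~ R x a]]|.
Proof.
rewrite card_sum.
under eq_bigr do rewrite card_sum mulr_sumr.
rewrite exchange_big /=; apply: eq_bigr => x _.
case: (B x) => /=; last by rewrite big1 // => P _; rewrite mulr0.
transitivity (\sum_(P in powerset (Q :&: [set a | R x a])) (-1) ^+ #|P| : int).
  rewrite big_mkcond /= [RHS]big_mkcond /=; apply: eq_bigr => P _.
  rewrite powersetI !inE.
  case: (P \subset Q) => //=.
  have -> : [forall a in P, R x a] = (P \subset [set a | R x a]).
    apply/forall_inP/subsetP => H a aP; first by rewrite inE H.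
    by have := H a aP; rewrite inE.
  by case: (P \subset _); rewrite ?mulr1 ?mulr0.
rewrite alt_sum; congr (_%:R); congr (nat_of_bool _); apply/idP/forall_inP => [/eqP H a aQ|H].
  apply/negP => Ra; have : a \in Q :&: [set a | R x a] by rewrite !inE aQ Ra.
  by rewrite H inE.
apply/eqP/setP => a; rewrite !inE; apply/andP => -[aQ Ra].
by have := H a aQ; rewrite Ra.
Qed.
Lemma pres1 (V : finType) k (phi : labeling V k) : preserves 1%g phi.
Proof. by apply/forallP => v; rewrite perm1. Qed.

Lemma presM (V : finType) k (phi : labeling V k) s u :
  preserves s phi -> preserves u phi -> preserves (s * u)%g phi.
Proof.
move=> /forallP Hs /forallP Hu; apply/forallP => v.
by rewrite permM (eqP (Hu _)) (eqP (Hs _)).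
Qed.

Lemma presV (V : finType) k (phi : labeling V k) s :
  preserves s phi -> preserves (s^-1)%g phi.
Proof.
move=> /forallP Hs; apply/forallP => v.
by rewrite -{2}(permKV s v) (eqP (Hs _)).
Qed.

Lemma presX (V : finType) k (phi : labeling V k) s n :
  preserves s phi -> preserves (s ^+ n)%g phi.
Proof.
move=> Hs; elim: n => [|n IH]; first by rewrite expg0 pres1.
by rewrite expgS presM.
Qed.

Arguments presM {V k phi s u}. Arguments presV {V k phi s}. Arguments presX {V k phi s}.

Lemma rot_lemma (V : finType) k (phi : labeling V k) (rho x : {perm V}) :
  x \in <[rho]>%g -> x != 1%g -> preserves x phi ->
  exists2 p, p \in primes #[rho]%g & preserves (rho ^+ (#[rho]%g %/ p))%g phi.
Proof.
move=> xr x1 px.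
set t := #[rho]%g; set m := #[x]%g.
have mt : (m %| t)%N by rewrite /t orderE; apply: order_dvdG.
have m1 : (1 < m)%N.
  by rewrite ltn_neqAle eq_sym order_eq1 x1 order_gt0.
set p := pdiv m.
have pp : prime p by apply: pdiv_prime.
have pm : (p %| m)%N by apply: pdiv_dvd.
have pt : (p %| t)%N by apply: dvdn_trans mt.
have tpos : (0 < t)%N by apply: order_gt0.
exists p; first by rewrite mem_primes pp tpos pt.
set y := (x ^+ (m %/ p))%g; set z := (rho ^+ (t %/ p))%g.
have oy : #[y]%g = p.
  rewrite /y orderXdiv ?dvdn_div //. 
  by rewrite divnA // mulKn // prime_gt0.
have oz : #[z]%g = p.
  rewrite /z orderXdiv ?dvdn_div //.
  by rewrite divnA // mulKn // prime_gt0.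
have : (<[y]> :==: <[z]>)%g.
  rewrite (eq_subG_cyclic (cycle_cyclic rho)).
  - by rewrite -!orderE oy oz.
  - by rewrite cycle_subG groupX.
  - by rewrite cycle_subG groupX // cycle_id.
move/eqP => eyz.
have : z \in <[y]>%g by rewrite eyz cycle_id.
case/cycleP => a ->.
by rewrite /y -expgM presX.
Qed.

Theorem theorem3 (V : finType) (e : rel V)
  (e_sym : symmetric e) (e_irr : irreflexive e)
  (t : nat) (rho tau : {perm V})
  (rho_aut : rho \in AutG e) (tau_aut : tau \in AutG e)
  (rho_ord : #[rho]%g = t)
  (tau_inv : (tau ^+ 2)%g = 1%g)
  (tau_rho : forall i : nat, (rho ^+ i * tau)%g = (tau * rho ^- i)%g)
  (Aut_eq : AutG e = [set (rho ^+ i)%g | i : 'I_t] :|: [set (rho ^+ i * tau)%g | i : 'I_t])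
  (Aut_card : #|AutG e| = (2 * t)%N) :
  let Pstar : {set {perm V}} := [set:: [seq (rho ^+ (t %/ p))%g | p <- primes t]] in
  forall k : nat, (0 < k)%N ->
  (forall i : nat, (i < t)%N ->
     let sigma := (rho ^+ i * tau)%g in
     (Neq e k [set 1%g; sigma] : int) =
       \sum_(P in powerset (sigma |: Pstar) | sigma \in P)
          (-1) ^+ (#|P|.-1) * (Nge k P : int))
  /\
  (L e k : int) =
     \sum_(P in powerset Pstar) (-1) ^+ #|P| * (Nge k P : int)
     - \sum_(i < t) (Neq e k [set 1%g; (rho ^+ i * tau)%g] : int).
Proof.
move=> Pstar k kpos.
have tpos : (0 < t)%N by rewrite -rho_ord order_gt0.
have rotA j : (rho ^+ j)%g \in AutG e.
  rewrite Aut_eq inE; apply/orP; left; apply/imsetP.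
  by exists (Ordinal (ltn_pmod j tpos)) => //=; rewrite -rho_ord expg_mod_order.
have reflA (i : 'I_t) : (rho ^+ i * tau)%g \in AutG e.
  by rewrite Aut_eq inE; apply/orP; right; apply/imsetP; exists i.
have tau_nr : tau \notin <[rho]>%g.
  set A := [set (rho ^+ i)%g | i : 'I_t].
  set B := [set (rho ^+ i * tau)%g | i : 'I_t].
  have cA : (#|A| <= t)%N by rewrite (leq_trans (leq_imset_card _ _)) // card_ord.
  have cB : (#|B| <= t)%N by rewrite (leq_trans (leq_imset_card _ _)) // card_ord.
  have H := cardsU A B; rewrite -Aut_eq Aut_card in H.
  have AB0 : #|A :&: B| = 0%N by lia.
  apply/negP => /cycleP [j tj].
  have : (rho ^+ (j %% t))%g \in A :&: B.
    rewrite inE; apply/andP; split; apply/imsetP.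
      by exists (Ordinal (ltn_pmod j tpos)).
    exists (Ordinal tpos) => //=.
    by rewrite expg0 mul1g tj -rho_ord expg_mod_order.
  move=> Hin; have : (0 < #|A :&: B|)%N by apply/card_gt0P; exists (rho ^+ (j %% t))%g.
  by rewrite AB0.
have sig_nr j : (rho ^+ j * tau)%g \notin <[rho]>%g.
  by rewrite groupMl // groupX // cycle_id.
have reflrot j i : ((rho ^+ j * tau) * (rho ^+ i * tau)^-1)%g \in <[rho]>%g.
  rewrite invMg mulgA mulgK.
  by rewrite groupM ?groupV ?groupX ?cycle_id.
have memP s : s \in Pstar -> exists2 p, p \in primes t & s = (rho ^+ (t %/ p))%g.
  by rewrite /Pstar inE => /mapP [p pP ->]; exists p.
have P_rot s : s \in Pstar -> s \in <[rho]>%g.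
  by case/memP => p _ ->; rewrite groupX ?cycle_id.
have P_aut s : s \in Pstar -> s \in AutG e.
  by case/memP => p _ ->.
have P_ne1 s : s \in Pstar -> s != 1%g.
  case/memP => p; rewrite mem_primes => /and3P [pp _ pt] ->.
  apply/negP => /eqP H.
  have : (t %| t %/ p)%N by rewrite -{1}rho_ord order_dvdn H.
  have p1 : (1 < p)%N by apply: prime_gt1.
  have d0 : (0 < t %/ p)%N by rewrite divn_gt0 ?prime_gt0 // dvdn_leq.
  move/(dvdn_leq d0); rewrite leqNgt ltn_Pdiv //.
have sig_nP j : (rho ^+ j * tau)%g \notin Pstar.
  by apply/negP => /P_rot; apply/negP.
pose D (phi : labeling V k) := [forall s in Pstar, ~~ preserves s phi].
have noRot phi x : D phi -> x \in <[rho]>%g -> preserves x phi -> x = 1%g.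
  move=> Dp xr px; apply/eqP; apply/negP => /negP x1.
  have [p pP pz] := @rot_lemma _ _ phi rho x xr x1 px.
  move/forall_inP: Dp => /(_ (rho ^+ (t %/ p))%g).
  rewrite -rho_ord pz => /implyP /=; rewrite implybF => /negP; apply.
  by rewrite /Pstar inE rho_ord; apply: map_f; rewrite -rho_ord.
have refl2 phi (i j : 'I_t) : D phi -> preserves (rho ^+ i * tau)%g phi ->
    preserves (rho ^+ j * tau)%g phi -> i = j.
  move=> Dp pi pj.
  have := noRot phi _ Dp (reflrot i j) (presM pi (presV pj)).
  move/eqP; rewrite -eq_mulgV1 => /eqP /mulIg /eqP.
  rewrite eq_expg_mod_order rho_ord !modn_small // => /eqP H.
  by apply: val_inj.
have F1 phi (i : 'I_t) : (stab e phi == [set 1%g; (rho ^+ i * tau)%g])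
     = preserves (rho ^+ i * tau)%g phi && D phi.
  apply/eqP/andP => [H | [ps Dp]].
    have : (rho ^+ i * tau)%g \in stab e phi by rewrite H set22.
    rewrite /stab inE => /andP [_ ps]; split => //.
    apply/forall_inP => s sP; apply/negP => pss.
    have : s \in stab e phi by rewrite /stab inE P_aut.
    rewrite H !inE => /orP [/eqP s1 | /eqP ss].
      by move: (P_ne1 s sP); rewrite s1 eqxx.
    by move: (P_rot s sP); rewrite ss; apply/negP.
  apply/setP => s; rewrite /stab in_set in_set2; apply/andP/orP => [[sA psp] | [/eqP -> | /eqP ->]].
  - move: sA; rewrite Aut_eq inE => /orP [/imsetP [j _ sj] | /imsetP [j _ sj]].
      left; apply/eqP; apply: (noRot phi) => //.
      by rewrite sj groupX ?cycle_id.
    right; apply/eqP; rewrite sj; congr (_ * _)%g; congr (_ ^+ _)%g.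
    by congr val; apply: (refl2 phi) => //; rewrite -sj.
  - by rewrite -(expg0 rho) rotA pres1.
  - by rewrite reflA.
have F2 phi : ((D phi)%:R : int) = (distinguishing e phi)%:R
     + \sum_(i < t) (stab e phi == [set 1%g; (rho ^+ i * tau)%g])%:R.
  have stab1 : (stab e phi == [set 1%g]) -> D phi.
    move/eqP => H; apply/forall_inP => s sP; apply/negP => pss.
    have : s \in stab e phi by rewrite /stab inE P_aut.
    by rewrite H inE => s1; move: (P_ne1 s sP); rewrite s1.
  rewrite /distinguishing.
  case Dp: (D phi); last first.
    rewrite big1 => [|i _]; last by rewrite F1 Dp andbF.
    by case: eqP => // /eqP /stab1; rewrite Dp.
  have [j pj|nj] := pickP (fun j : 'I_t => preserves (rho ^+ j * tau)%g phi).
    rewrite (bigD1 j) //= F1 pj Dp /= big1 => [|i ij]; last first.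
      rewrite F1 Dp andbT; case: (boolP (preserves _ phi)) => // pi.
      by move: ij; rewrite (refl2 phi i j Dp pi pj) eqxx.
    have -> : (stab e phi == [set 1%g]) = false.
      apply/negbTE/negP => /eqP H.
      have : (rho ^+ j * tau)%g \in stab e phi by rewrite /stab inE reflA.
      rewrite H inE => /eqP s1; move: (sig_nr j); rewrite s1 group1.
      by [].
    by rewrite add0r addr0.
  rewrite big1 => [|i _]; last by rewrite F1 nj.
  have -> : (stab e phi == [set 1%g]).
    apply/eqP/setP => s; rewrite /stab in_set in_set1; apply/andP/eqP => [[sA psp] | ->].
      move: sA; rewrite Aut_eq inE => /orP [/imsetP [j _ sj] | /imsetP [j _ sj]].
        apply: (noRot phi) => //; by rewrite sj groupX ?cycle_id.
      by move: (nj j); rewrite -sj psp.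
    by rewrite -(expg0 rho) rotA pres1.
  by rewrite addr0.
split.
  move=> i ilt sigma.
  have sP : sigma \notin Pstar by apply: sig_nP.
  transitivity (#|[set phi : labeling V k | preserves sigma phi && [forall s in Pstar, ~~ preserves s phi]]| : int).
    rewrite /Neq; congr (Posz _); apply: eq_card => phi; rewrite !inE.
    exact: (F1 phi (Ordinal ilt)).
  rewrite -IE.
  transitivity (\sum_(P in (fun Q => sigma |: Q) @: powerset Pstar) (-1) ^+ (#|P|.-1) * (Nge k P : int)).
    rewrite big_imset /=; last first.
      move=> P1 P2; rewrite !powersetE => H1 H2 H.
      have n1 : sigma \notin P1 by apply: contra sP; apply: (subsetP H1).
      have n2 : sigma \notin P2 by apply: contra sP; apply: (subsetP H2).
      by rewrite -(setU1K n1) -(setU1K n2) H.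
    apply: eq_bigr => P; rewrite powersetE => H1.
    have n1 : sigma \notin P by apply: contra sP; apply: (subsetP H1).
    rewrite cardsU1 n1 add1n /=; congr (_ * Posz _).
    rewrite /Nge; apply: eq_card => phi; rewrite !inE.
    apply/andP/forall_inP => [[H0 H] | H].
      move=> s; rewrite in_setU1 => /orP [/eqP -> // | sP'].
      by move/forall_inP: H; apply.
    by split; [apply: H; rewrite setU11 | apply/forall_inP => s sP'; apply: H; rewrite setU1r].
  apply: eq_bigl => P; apply/imsetP/andP => [[P' HP' ->] | [HP sPP]].
    split; last by rewrite setU11.
    by move: HP'; rewrite !powersetE; apply: setUS.
  exists (P :\ sigma); last by rewrite setD1K.
  rewrite powersetE; apply/subsetP => x; rewrite in_setD1 => /andP [xs xP].
  move: HP; rewrite powersetE => /subsetP /(_ x xP); rewrite in_setU1.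
  by case/orP => // /eqP xs'; move: xs; rewrite xs' eqxx.
have -> : \sum_(P in powerset Pstar) (-1) ^+ #|P| * (Nge k P : int)
    = #|[set phi : labeling V k | D phi]|.
  rewrite -(@IE _ _ (fun _ => true) Pstar (fun phi s => preserves s phi)).
  apply: eq_bigr => P _; congr (_ * Posz _); rewrite /Nge; apply: eq_card => phi.
have -> : (#|[set phi : labeling V k | D phi]| : int) = (L e k : int)
     + \sum_(i < t) (Neq e k [set 1%g; (rho ^+ i * tau)%g] : int).
  rewrite /L /Neq card_sum (@card_sum _ (@distinguishing V e k)).
  have E : \sum_(i < t) (#|[set phi : labeling V k | stab e phi == [set 1%g; (rho ^+ i * tau)%g]]| : int)
      = \sum_(i < t) \sum_(x : labeling V k) ((stab e x == [set 1%g; (rho ^+ i * tau)%g])%:R : int).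
    by apply: eq_bigr => i _; exact: (@card_sum _ (fun phi => stab e phi == [set 1%g; (rho ^+ i * tau)%g])).
  rewrite E.
  rewrite (exchange_big _ _ (index_enum _)) /= -big_split /=.
  by apply: eq_bigr => phi _; rewrite F2.
by rewrite addrK.
Qed.
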